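(* Let $\mathrm A$ be a nontrivial system of Bilocal Classical Theory (BCT) and $\rho=\sum_ip_i|i)_{\mathrm A}$ a deterministic state, with $|i)_{\mathrm A}$ the pure states and $\mathbf p=(p_i)$ a probability distribution. Then for each $k=1,2,3$, \[ S_k^{\rm reg}(\rho)=S_k(\rho)+1=H(\mathbf p)+1 . \]
   Context: BCT is an operational probabilistic theory with the following structure. Systems: a trivial system and, for every integer $D>1$, exactly one system of size $D$. For a nontrivial system $\mathrm A$ of size $D_{\mathrm A}$, every state is a nonnegative combination of the $D_{\mathrm A}$ pure states $|i)_{\mathrm A}$, which are the vertices of the simplex of deterministic states and are jointly perfectly discriminable; BCT is weakly causal (unique deterministic effect per system), classical and convex. For nontrivial $\mathrm A,\mathrm B$, the composite $\mathrm{AB}$ has size $2D_{\mathrm A}D_{\mathrm B}$, with pure states $|(ij)_s)_{\mathrm{AB}}$, $s\in\{+,-\}$, and $|i)_{\mathrm A}\boxtimes|j)_{\mathrm B}=\tfrac12\sum_{s=\pm}|(ij)_s)_{\mathrm{AB}}$; for three systems $((ij)_{s_1}k)_{s_2}=(i(jk)_{s_1s_2})_{s_1}$. Consequently $\rho^{\boxtimes N}=\sum_{\mathbf i,\mathbf s}p_{i_1}\cdots p_{i_N}2^{-(N-1)}|\mathbf i_{\mathbf s})$, with $|\mathbf i_{\mathbf s})$, $\mathbf i\in\{1,\dots,D_{\mathrm A}\}^N$, $\mathbf s\in\{\pm\}^{N-1}$, the pure states of $\mathrm A^{\boxtimes N}$. Entropies: an event is atomic if every refinement of it (collection of events from a common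 test summing to it) consists of multiples of it; an atomic observation test has only atomic effects. For a deterministic state $\sigma$, let $\mathcal P(\sigma)$ be its decompositions $\sigma=\sum_ip_i\phi_i$ into pure states, and for an atomic observation test $\{a_j\}$ let $I,J$ have joint distribution $q(i,j)=p_i(a_j|\phi_i)$. $S_1(\sigma)=\inf_{\{a_j\}}H(J)$, $S_2(\sigma)=\sup_{\mathcal P(\sigma)}\sup_{\{a_j\}}H(I:J)$, $S_3(\sigma)=\inf_{\mathcal P(\sigma)}H(I)$, and $S_k^{\rm reg}(\sigma)=\limsup_{N\to\infty}S_k(\sigma^{\boxtimes N})/N$; $H$ is Shannon entropy in base 2. *)

(* Defs.v *)
From mathcomp Require Import all_boot all_order all_algebra.
From mathcomp Require Import all_classical all_reals all_analysis.
Set Implicit Arguments. Unset Strict Implicit. Unset Printing Implicit Defensive.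
Import Order.TTheory GRing.Theory Num.Theory.
Local Open Scope classical_set_scope.
Local Open Scope ring_scope.

Section BCT.
Variable R : realType.

(* logarithm in base 2 (ln 0 = 0 in mathcomp, so 0 * log2 0 = 0) *)
Definition log2 (x : R) : R := ln x / ln 2.

Definition entropy (X : finType) (q : X -> R) : R :=
  - \sum_(x : X) q x * log2 (q x).

Definition mutinf (n m : nat) (q : 'I_n -> 'I_m -> R) : R :=
  entropy (fun i : 'I_n => \sum_(j < m) q i j)
  + entropy (fun j : 'I_m => \sum_(i < n) q i j)
  - entropy (fun ij : 'I_n * 'I_m => q ij.1 ij.2).

(* A (nontrivial) system of BCT of size #|T| is a classical system whose
   pure (normalized) states are the vertices |t) = delta_t, t : T.
   States are nonnegative vectors T -> R, effects are vectors T -> [0,1],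
   the unique deterministic effect is the all-ones vector. *)
Section System.
Variable T : finType.

Definition pure_state (t : T) : T -> R := fun x => (x == t)%:R.

Definition pairing (e sigma : T -> R) : R := \sum_(x : T) e x * sigma x.

Definition deterministic_state (sigma : T -> R) : Prop :=
  (forall x, 0 <= sigma x) /\ \sum_(x : T) sigma x = 1.

Definition is_effect (e : T -> R) : Prop := forall x, 0 <= e x <= 1.

Definition obs_test (m : nat) (a : 'I_m -> T -> R) : Prop :=
  (forall j, is_effect (a j)) /\ (forall x, \sum_(j < m) a j x = 1).

(* a refinement of e: events b_1..b_k, all appearing in one common
   observation test, summing to e *)
Definition refinement (e : T -> R) (k : nat) (b : 'I_k -> T -> R) : Prop :=
  (forall i, is_effect (b i)) /\ (forall x, \sum_(i < k) b i x = e x) /\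
  exists (l : nat) (c : 'I_l -> T -> R),
    (forall i, is_effect (c i)) /\
    (forall x, \sum_(i < k) b i x + \sum_(i < l) c i x = 1).

Definition atomic (e : T -> R) : Prop :=
  is_effect e /\
  forall (k : nat) (b : 'I_k -> T -> R), refinement e b ->
    forall i, exists lam : R, forall x, b i x = lam * e x.

Definition atomic_obs_test (m : nat) (a : 'I_m -> T -> R) : Prop :=
  obs_test a /\ forall j, atomic (a j).

Definition pure_decomposition (sigma : T -> R) (n : nat)
    (w : 'I_n -> R) (t : 'I_n -> T) : Prop :=
  (forall i, 0 <= w i) /\ \sum_(i < n) w i = 1 /\
  forall x, sigma x = \sum_(i < n) w i * pure_state (t i) x.

Definition S1 (sigma : T -> R) : R :=
  inf [set v | exists (m : nat) (a : 'I_m -> T -> R),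
        atomic_obs_test a /\ v = entropy (fun j => pairing (a j) sigma)].

Definition S2 (sigma : T -> R) : R :=
  sup [set v | exists (n : nat) (w : 'I_n -> R) (t : 'I_n -> T)
                      (m : nat) (a : 'I_m -> T -> R),
        pure_decomposition sigma w t /\ atomic_obs_test a /\
        v = mutinf (fun i j => w i * pairing (a j) (pure_state (t i)))].

Definition S3 (sigma : T -> R) : R :=
  inf [set v | exists (n : nat) (w : 'I_n -> R) (t : 'I_n -> T),
        pure_decomposition sigma w t /\ v = entropy w].

End System.

(* The system A^{⊠N}, A of size D: pure states |i_s), i : [D]^N,
   s : {+,-}^(N-1) (encoded as bool), size D^N 2^(N-1). *)
Definition tensor_index (D N : nat) : finType :=
  ({ffun 'I_N -> 'I_D} * {ffun 'I_N.-1 -> bool})%type.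

Definition tensor_pow (D : nat) (p : 'I_D -> R) (N : nat) :
    tensor_index D N -> R :=
  fun x => (\prod_(k < N) p (x.1 k)) * (2%:R ^- N.-1).

Definition regularized
    (S : forall T : finType, (T -> R) -> R) (D : nat) (p : 'I_D -> R)
    : \bar R :=
  limn_esup (fun N : nat => ((S (tensor_index D N) (@tensor_pow D p N)) / N%:R)%:E).

End BCT.

(* Main.v *)
Require Import Defs.
From mathcomp Require Import all_boot all_order all_algebra.
From mathcomp Require Import all_classical all_reals all_analysis.
From mathcomp Require Import ring lra.
Import Order.TTheory GRing.Theory Num.Theory.
Local Open Scope ring_scope.
Set Implicit Arguments. Unset Strict Implicit. Unset Printing Implicit Defensive.


Section Aux.
Variable R : realType.

Lemma ln2_gt0 : 0 < ln (2%:R : R).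
Proof. by apply: ln_gt0; rewrite ltr1n. Qed.

Lemma log2_le (x y : R) : 0 < x -> x <= y -> log2 x <= log2 y.
Proof.
move=> x0 xy; have y0 : 0 < y by apply: lt_le_trans xy.
rewrite /log2 ler_pM2r ?invr_gt0 ?ln2_gt0 //.
by rewrite ler_ln ?posrE.
Qed.

Lemma mul_log2 (a b : R) : 0 <= a -> 0 <= b ->
  a * b * log2 (a * b) = a * b * log2 a + a * b * log2 b.
Proof.
rewrite le0r => /orP[/eqP->|a0]; first by rewrite !mul0r add0r.
rewrite le0r => /orP[/eqP->|b0]; first by rewrite !(mulr0, mul0r) addr0.
by rewrite /log2 lnM ?posrE // mulrDl mulrDr.
Qed.

Lemma prod_log2 (I : finType) (F : I -> R) : (forall i, 0 <= F i) ->
  (\prod_i F i) * log2 (\prod_i F i) = (\prod_i F i) * \sum_i log2 (F i).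
Proof.
move=> F0.
have [[i Fi0]|] := pselect (exists i, F i = 0).
  by rewrite (bigD1 i) //= Fi0 !mul0r.
move=> hn.
have Fp : forall i, 0 < F i.
  move=> i; rewrite lt0r F0 andbT; apply/eqP => h; apply: hn; by exists i.
have : 0 < \prod_i F i /\ ln (\prod_i F i) = \sum_i ln (F i).
  apply: (big_rec2 (fun y x => 0 < x /\ ln x = y)); first by rewrite ln1.
  move=> i y1 y2 _ [y20 <-]; split; first by rewrite mulr_gt0.
  by rewrite lnM ?posrE.
move=> [_ h]; congr (_ * _); rewrite /log2 h mulr_suml //.
Qed.

Lemma entropy_group (K T : finType) (q : K -> R) (f : K -> T) (s : T -> R) :
  (forall k, 0 <= q k) -> (forall x, s x = \sum_(k | f k == x) q k) ->
  entropy s <= entropy q.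
Proof.
move=> q0 hs.
have E : \sum_x s x * log2 (s x) = \sum_k q k * log2 (s (f k)).
  rewrite (partition_big f predT) //=.
  apply: eq_bigr => x _; rewrite {1}hs mulr_suml.
  by apply: eq_bigr => k /eqP ->.
rewrite /entropy E lerN2; apply: ler_sum => k _.
have [->|qk] := eqVneq (q k) 0; first by rewrite !mul0r.
have qp : 0 < q k by rewrite lt0r qk q0.
apply: ler_wpM2l => //; apply: log2_le => //.
rewrite hs (bigD1 k) //= lerDl; exact: sumr_ge0.
Qed.

Lemma sum_delta (T : finType) (G : T -> R) (x : T) :
  \sum_y G y * (y == x)%:R = G x.
Proof.
rewrite (bigD1 x) //= eqxx mulr1 big1 ?addr0 // => y /negPf ->; by rewrite mulr0.
Qed.

Lemma sum_delta' (T : finType) (G : T -> R) (x : T) :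
  \sum_y G y * (x == y)%:R = G x.
Proof. by rewrite -(sum_delta G x); apply: eq_bigr => y _; rewrite eq_sym. Qed.

End Aux.


Section Sys.
Variable R : realType.
Variable T : finType.

Lemma pairing_pure (e : T -> R) (x : T) : pairing e (pure_state R x) = e x.
Proof. by rewrite /pairing /pure_state sum_delta. Qed.

Lemma pure_effect (x : T) : is_effect (pure_state R x).
Proof. by move=> y; rewrite /pure_state ler0n lern1 leq_b1. Qed.

Lemma pure_atomic (x : T) : atomic (pure_state R x).
Proof.
split; first exact: pure_effect.
move=> k b [be [hb _]] i; exists (b i x) => y.
rewrite /pure_state; case: eqVneq => [->|yx]; first by rewrite mulr1.
rewrite mulr0.
have : \sum_(i < k) b i y = 0 by rewrite hb /pure_state (negPf yx).
move/psumr_eq0P => h; apply: h => // j _; by case/andP: (be j y).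
Qed.

Lemma atomic_char (e : T -> R) (x0 : T) : atomic e ->
  exists lam, exists x, forall y, e y = lam * (y == x)%:R.
Proof.
move=> [ee hat].
have [[x ex]|h] := pselect (exists x, e x != 0); last first.
  exists 0, x0 => y; rewrite mul0r; apply/eqP; apply/negPn/negP => ey.
  by apply: h; exists y.
exists (e x), x => y.
case: (eqVneq y x) => [->|yx]; first by rewrite mulr1.
rewrite mulr0.
pose b : 'I_2 -> T -> R := fun i z =>
  if i == ord0 then e z * (z == x)%:R else e z * (z != x)%:R.
have bsum : forall z, \sum_(i < 2) b i z = e z.
  move=> z; rewrite !big_ord_recl big_ord0 /b /=.
  by case: (z == x); rewrite /= ?mulr1 ?mulr0 ?addr0 ?add0r.
have hr : refinement e b.
  split.
    move=> i z; rewrite /b; case: (i == ord0); case: (z == x);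
      rewrite /= ?mulr1 ?mulr0 ?lexx ?ler01 //; exact: ee z.
  split => //.
  exists 1%N, (fun _ z => 1 - e z); split.
    move=> _ z; case/andP: (ee z) => h1 h2; apply/andP; split; lra.
  by move=> z; rewrite bsum big_ord_recl big_ord0 addr0 addrC subrK.
have [lam hl] := hat 2%N b hr ord0.
have hx := hl x; have hy := hl y.
rewrite /b /= eqxx (negPf yx) mulr1 mulr0 in hx hy.
have lam1 : lam = 1.
  apply/eqP; rewrite -subr_eq0; apply/eqP.
  apply: (mulIf ex); rewrite mul0r mulrBl mul1r -hx; lra.
by rewrite hy lam1 mul1r.
Qed.

Lemma sum_enumT (F : T -> R) : \sum_(i < #|T|) F (enum_val i) = \sum_x F x.
Proof. by rewrite -big_enum_val. Qed.

End Sys.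


Section Sys2.
Variable R : realType.
Variable T : finType.
Variable sigma : T -> R.
Hypothesis hdet : deterministic_state sigma.

Lemma exT : exists x : T, True.
Proof.
case: (pickP (@predT T)) => [x _|h]; first by exists x.
exfalso; have := hdet.2; rewrite big_pred0 // => /eqP; by rewrite eq_sym oner_eq0.
Qed.

Definition dtest : 'I_#|T| -> T -> R := fun j => pure_state R (enum_val j).

Lemma dtest_atomic : atomic_obs_test dtest.
Proof.
split; last by move=> j; exact: pure_atomic.
split; first by move=> j; exact: pure_effect.
move=> x; rewrite /dtest (sum_enumT (fun y : T => pure_state R y x)) /pure_state.
rewrite (bigD1 x) //= eqxx big1 ?addr0 // => y /negPf; by rewrite eq_sym => ->.
Qed.

Lemma dtest_entropy : entropy (fun j => pairing (dtest j) sigma) = entropy sigma.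
Proof.
rewrite /entropy /dtest; congr (- _).
rewrite -(sum_enumT (fun y => sigma y * log2 (sigma y))).
apply: eq_bigr => j _; congr (_ * log2 _); rewrite /pairing /pure_state;
  by rewrite (eq_bigr (fun y => sigma y * (y == enum_val j)%:R)) ?sum_delta // => y _; rewrite mulrC.
Qed.

Lemma ddecomp : pure_decomposition sigma (fun i : 'I_#|T| => sigma (enum_val i)) enum_val.
Proof.
split; first by move=> i; exact: hdet.1.
split; first by rewrite (sum_enumT sigma) hdet.2.
move=> x; rewrite (sum_enumT (fun y : T => sigma y * pure_state R y x)) /pure_state.
by rewrite sum_delta'.
Qed.

Lemma atomic_rep m (a : 'I_m -> T -> R) : (forall j, atomic (a j)) ->
  exists lam : 'I_m -> R, exists x : 'I_m -> T,
    forall j y, a j y = lam j * (y == x j)%:R.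
Proof.
move=> ha; have [x0 _] := exT.
have h : forall j, exists lx : R * T, forall y, a j y = lx.1 * (y == lx.2)%:R.
  move=> j; have [lam [x hx]] := atomic_char x0 (ha j); by exists (lam, x).
have [f hf] := choice h.
by exists (fun j => (f j).1), (fun j => (f j).2).
Qed.

Lemma S1E : S1 sigma = entropy sigma.
Proof.
rewrite /S1; set E := (X in inf X).
have Hin : E (entropy sigma).
  exists #|T|, dtest; split; first exact: dtest_atomic.
  by rewrite dtest_entropy.
have Hlb : lbound E (entropy sigma).
  move=> v [m [a [[[ae asum] aat] ->]]].
  have [lam [x hx]] := atomic_rep aat.
  apply: (entropy_group (f := x)).
    move=> j; apply: sumr_ge0 => y _; apply: mulr_ge0; first by case/andP: (ae j y).
    exact: hdet.1.
  move=> y.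
  have hp : forall j, pairing (a j) sigma = lam j * sigma (x j).
    move=> j; rewrite /pairing (eq_bigr (fun z => (lam j * sigma z) * (z == x j)%:R)).
      by rewrite sum_delta.
    by move=> z _; rewrite hx; ring.
  rewrite (eq_bigr (fun j => lam j * sigma y)); last by move=> j /eqP <-; rewrite hp.
  rewrite -mulr_suml -{1}(mulr1 (sigma y)) mulrC; congr (_ * _).
  rewrite [RHS]big_mkcond -(asum y) /=; apply: eq_bigr => j _; rewrite hx eq_sym.
  by case: (x j == y); rewrite ?mulr1 ?mulr0.
apply/eqP; rewrite eq_le; apply/andP; split.
  apply: ge_inf => //; by exists (entropy sigma).
by apply: lb_le_inf => //; exists (entropy sigma).
Qed.

Lemma S3E : S3 sigma = entropy sigma.
Proof.
rewrite /S3; set E := (X in inf X).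
have Hin : E (entropy sigma).
  exists #|T|, (fun i : 'I_#|T| => sigma (enum_val i)), enum_val; split; first exact: ddecomp.
  rewrite /entropy (sum_enumT (fun y => sigma y * log2 (sigma y))) //.
have Hlb : lbound E (entropy sigma).
  move=> v [n [w [t [[w0 [w1 hw]] ->]]]].
  apply: (entropy_group (f := t)) => // y.
  rewrite hw [RHS]big_mkcond /=; apply: eq_bigr => i _; rewrite /pure_state.
  by rewrite eq_sym; case: (t i == y); rewrite ?mulr1 ?mulr0.
apply/eqP; rewrite eq_le; apply/andP; split.
  apply: ge_inf => //; by exists (entropy sigma).
by apply: lb_le_inf => //; exists (entropy sigma).
Qed.


Lemma mutinf_eq n (w : 'I_n -> R) (t : 'I_n -> T) m (a : 'I_m -> T -> R)
    (lam : 'I_m -> R) (x : 'I_m -> T) :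
  pure_decomposition sigma w t -> (forall j, is_effect (a j)) ->
  (forall y, \sum_(j < m) a j y = 1) ->
  (forall j y, a j y = lam j * (y == x j)%:R) ->
  mutinf (fun i j => w i * pairing (a j) (pure_state R (t i))) = entropy sigma.
Proof.
move=> [w0 [w1 hw]] ae asum hx.
have -> : (fun i j => w i * pairing (a j) (pure_state R (t i))) =
          (fun i j => w i * a j (t i)).
  by apply/funext => i; apply/funext => j; rewrite pairing_pure.
have lam0 : forall j, 0 <= lam j.
  move=> j; have := hx j (x j); rewrite eqxx mulr1 => <-; by case/andP: (ae j (x j)).
have a0 : forall j y, 0 <= a j y by move=> j y; case/andP: (ae j y).
have s0 : forall y, 0 <= sigma y by exact: hdet.1.
have hI : (fun i => \sum_(j < m) w i * a j (t i)) = w.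
  by apply/funext => i; rewrite -mulr_sumr asum mulr1.
have hJ : (fun j => \sum_(i < n) w i * a j (t i)) = (fun j => lam j * sigma (x j)).
  apply/funext => j; rewrite hw mulr_sumr; apply: eq_bigr => i _.
  rewrite hx /pure_state eq_sym; ring.
have aL : forall j y, a j y * log2 (a j y) = a j y * log2 (lam j).
  move=> j y; rewrite hx; case: (y == x j); by rewrite ?mulr1 ?mulr0 ?mul0r.
set SW := \sum_i w i * log2 (w i).
set SA := \sum_j lam j * sigma (x j) * log2 (lam j).
set SB := \sum_j lam j * sigma (x j) * log2 (sigma (x j)).
have HIJ : \sum_(p : 'I_n * 'I_m) w p.1 * a p.2 (t p.1) * log2 (w p.1 * a p.2 (t p.1))
           = SW + SA.
  rewrite -(pair_bigA _ (fun i j => w i * a j (t i) * log2 (w i * a j (t i)))) /=.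
  rewrite (eq_bigr (fun i => \sum_j (w i * a j (t i) * log2 (w i) +
                                     w i * (a j (t i) * log2 (lam j))))); last first.
    move=> i _; apply: eq_bigr => j _; rewrite mul_log2 // -aL; ring.
  under eq_bigr do rewrite big_split; rewrite big_split /=; congr (_ + _).
    by apply: eq_bigr => i _; rewrite -mulr_suml (congr1 (fun f => f i) hI).
  rewrite exchange_big /=; apply: eq_bigr => j _.
  rewrite -(congr1 (fun f => f j) hJ) /= mulr_suml; apply: eq_bigr => i _; ring.
have HJ : \sum_j lam j * sigma (x j) * log2 (lam j * sigma (x j)) = SA + SB.
  rewrite -big_split /=; apply: eq_bigr => j _; by rewrite mul_log2.
have HS : \sum_y sigma y * log2 (sigma y) = SB.
  rewrite (eq_bigr (fun y => \sum_j (sigma y * log2 (sigma y) * lam j) * (y == x j)%:R)).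
    rewrite exchange_big /=; apply: eq_bigr => j _; rewrite sum_delta; ring.
  move=> y _; rewrite -{1}(mulr1 (sigma y * _)) -{1}(asum y) mulr_sumr.
  by apply: eq_bigr => j _; rewrite hx mulrA.
rewrite /mutinf /= hI hJ /entropy HIJ HJ HS -/SW; ring.
Qed.

Lemma S2E : S2 sigma = entropy sigma.
Proof.
rewrite /S2; set E := (X in sup X).
have -> : E = [set entropy sigma]%classic.
  apply/seteqP; split => v /=.
    move=> [n [w [t [m [a [hd [[[ae asum] aat] ->]]]]]]].
    have [lam [x hx]] := atomic_rep aat.
    exact: mutinf_eq hd ae asum hx.
  move=> ->.
  exists #|T|, (fun i : 'I_#|T| => sigma (enum_val i)), enum_val, #|T|, dtest.
  split; first exact: ddecomp.
  split; first exact: dtest_atomic.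
  have [lam [x hx]] := atomic_rep dtest_atomic.2.
  by rewrite (mutinf_eq ddecomp dtest_atomic.1.1 dtest_atomic.1.2 hx).
by rewrite sup1.
Qed.

End Sys2.


Section Tensor.
Variable R : realType.
Variable D : nat.
Variable p : 'I_D -> R.
Hypothesis hp0 : forall i, 0 <= p i.
Hypothesis hp1 : \sum_(i < D) p i = 1.

Lemma prod_sum1 N : \sum_(f : {ffun 'I_N -> 'I_D}) \prod_k p (f k) = 1.
Proof.
rewrite -(bigA_distr_bigA (fun (k : 'I_N) (a : 'I_D) => p a)) /=.
by rewrite big1 // => k _; rewrite hp1.
Qed.

Lemma prod_marg N (k0 : 'I_N) :
  \sum_(f : {ffun 'I_N -> 'I_D}) (\prod_k p (f k)) * log2 (p (f k0))
  = \sum_a p a * log2 (p a).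
Proof.
pose G := fun (k : 'I_N) (a : 'I_D) => p a * (if k == k0 then log2 (p a) else 1).
have E1 : forall f : {ffun 'I_N -> 'I_D},
    (\prod_k p (f k)) * log2 (p (f k0)) = \prod_k G k (f k).
  move=> f; rewrite /G big_split /=; congr (_ * _).
  rewrite (bigD1 k0) //= eqxx big1 ?mulr1 // => k /negPf ->; done.
rewrite (eq_bigr _ (fun f _ => E1 f)) -(bigA_distr_bigA G) /=.
rewrite (bigD1 k0) //= [X in _ * X]big1 ?mulr1.
  by apply: eq_bigr => a _; rewrite /G eqxx.
move=> k /negPf kk; rewrite /G.
by rewrite (eq_bigr (fun a => p a)) ?hp1 // => a _; rewrite kk mulr1.
Qed.

Let c n : R := (2%:R ^+ n)^-1.

Lemma c_card n : c n *+ #|{ffun 'I_n -> bool}| = 1.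
Proof.
rewrite card_ffun card_bool card_ord -mulr_natr natrX /c mulVf //.
Qed.

Lemma log2_c n : log2 (c n) = - n%:R.
Proof.
rewrite /log2 /c lnV ?posrE ?exprn_gt0 ?ltr0n // lnXn ?ltr0n //.
have l2 : ln (2%:R : R) != 0 by apply/lt0r_neq0/ln2_gt0.
by rewrite mulNr mulrnAl mulfV.
Qed.

Lemma tensor_det N : deterministic_state (@tensor_pow R D p N).
Proof.
split.
  move=> x; rewrite /tensor_pow; apply: mulr_ge0; first exact: prodr_ge0.
  by rewrite invr_ge0 exprn_ge0 ?ler0n.
rewrite /tensor_pow.
rewrite -(pair_bigA _ (fun (f : {ffun 'I_N -> 'I_D}) (s : {ffun 'I_N.-1 -> bool}) =>
           (\prod_(k < N) p (f k)) * 2%:R ^- N.-1)) /=.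
rewrite (eq_bigr (fun f : {ffun 'I_N -> 'I_D} => \prod_(k < N) p (f k))) ?prod_sum1 //.
move=> f _; rewrite sumr_const -mulrnAr.
by have := c_card N.-1; rewrite /c => ->; rewrite mulr1.
Qed.

Lemma tensor_entropy n :
  entropy (@tensor_pow R D p n.+1) = n.+1%:R * entropy p + n%:R.
Proof.
rewrite /entropy /tensor_pow /=.
rewrite -(pair_bigA _ (fun (f : {ffun 'I_n.+1 -> 'I_D}) (s : {ffun 'I_n -> bool}) =>
           (\prod_(k < n.+1) p (f k)) * 2%:R ^- n *
           log2 ((\prod_(k < n.+1) p (f k)) * 2%:R ^- n))) /=.
have P0 : forall f : {ffun 'I_n.+1 -> 'I_D}, 0 <= \prod_(k < n.+1) p (f k).
  by move=> f; apply: prodr_ge0.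
rewrite (eq_bigr (fun f : {ffun 'I_n.+1 -> 'I_D} => \sum_k (\prod_(k < n.+1) p (f k)) * log2 (p (f k))
                          - n%:R * \prod_(k < n.+1) p (f k))); last first.
  move=> f _; rewrite sumr_const.
  rewrite mul_log2 //.
  have := log2_c n; rewrite /c => ->.
  have := c_card n; rewrite /c => hc.
  transitivity ((\prod_(k < n.+1) p (f k) * log2 (\prod_(k < n.+1) p (f k))
                 - n%:R * \prod_(k < n.+1) p (f k)) *
                ((2%:R ^+ n)^-1 *+ #|{ffun 'I_n -> bool}|)); first ring.
  rewrite hc mulr1 prod_log2 // mulr_sumr.
  done.
rewrite sumrB exchange_big /=.
rewrite (eq_bigr (fun k => \sum_a p a * log2 (p a))); last first.
  by move=> k _; rewrite prod_marg.
rewrite -mulr_sumr prod_sum1 sumr_const card_ord -mulr_natl; ring.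
Qed.

End Tensor.


Section Final.
Local Open Scope classical_set_scope.
Local Open Scope ring_scope.
Lemma reg_lim (R : realType) (D : nat) (p : 'I_D -> R)
  (hp0 : forall i, 0 <= p i) (hp1 : \sum_(i < D) p i = 1)
  (S : forall T : finType, (T -> R) -> R)
  (hS : forall (T : finType) (s : T -> R), deterministic_state s -> S T s = entropy s) :
  regularized S p = (entropy p + 1)%:E.
Proof.
rewrite /regularized.
set u := (fun N : nat => _).
suff hc : u @ \oo --> (entropy p + 1)%:E by rewrite (cvg_limn_einf_sup hc).2.
rewrite -cvg_shiftS.
have -> : [sequence u n.+1]_n = (fun n => (entropy p + 1 - harmonic n)%:E).
  apply/funext => n /=; rewrite /u hS; last exact: tensor_det.
  rewrite tensor_entropy //; congr (_%:E).
  rewrite -natr1; field.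
  by rewrite natr1 pnatr_eq0.
apply: cvg_EFin; first by near=> n.
have -> : fine \o (fun n => (entropy p + 1 - harmonic n)%:E) =
          (fun _ => entropy p + 1) - harmonic by apply/funext.
rewrite -[X in _ --> X]subr0; apply: cvgB; first exact: cvg_cst.
exact: cvg_harmonic.
Unshelve. all: by end_near.
Qed.
End Final.

Theorem proposition4 (R : realType) (D : nat) (hD : (1 < D)%N)
    (p : 'I_D -> R) (hp0 : forall i, 0 <= p i) (hp1 : \sum_(i < D) p i = 1) :
  let rho : 'I_D -> R := fun i => \sum_(j < D) p j * @pure_state R _ j i in
  [/\ regularized (@S1 R) p = (S1 rho + 1)%:E /\ S1 rho + 1 = entropy p + 1,
      regularized (@S2 R) p = (S2 rho + 1)%:E /\ S2 rho + 1 = entropy p + 1 &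
      regularized (@S3 R) p = (S3 rho + 1)%:E /\ S3 rho + 1 = entropy p + 1].
Proof.
move=> rho.
have -> : rho = p.
  apply/funext => i; rewrite /rho /pure_state.
  by rewrite (eq_bigr (fun j => p j * (i == j)%:R)) ?sum_delta'.
have hd : deterministic_state p by split.
rewrite S1E // S2E // S3E //.
by split; split => //; apply: reg_lim => // T s hs;
  [exact: S1E | exact: S2E | exact: S3E].
Qed.
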